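(* Let $(\rho,\mathbf{u},\Sigma)$ be a smooth solution on $\Omega\subset\mathbb{R}^d$, with $\rho>0$ and $\alpha>0$, of the pressureless HRE system $$\partial_t\rho+\nabla\cdot(\rho\mathbf{u})=0,\quad \partial_t(\rho\mathbf{u})+\nabla\cdot(\rho\mathbf{u}\otimes\mathbf{u}+\Sigma\,\mathbb{I})=0,\quad \rho^{-1}\Sigma-\alpha\nabla\cdot(\rho^{-1}\nabla\Sigma)=\alpha\,\mathrm{tr}\big((\nabla\mathbf{u})^2\big).$$ Then the generalized kinetic energy density $K_E=\frac12\rho\big(|\mathbf{u}|^2+\alpha(\nabla\cdot\mathbf{u})^2\big)$ satisfies the local conservation law $$\partial_t K_E+\nabla\cdot\big((K_E+\Sigma)\mathbf{u}\big)=0.$$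
   Context: $\nabla\mathbf{u}$ is the velocity gradient matrix, $\mathbb{I}$ the identity matrix, and $(\nabla\cdot(\mathbf{a}\otimes\mathbf{b}))_i=\sum_j\partial_j(a_ib_j)$. *)

(* Defs.v *)
From HB Require Import structures.
From mathcomp Require Import all_boot all_order all_algebra.
From mathcomp Require Import all_classical all_reals all_analysis.
Set Implicit Arguments. Unset Strict Implicit. Unset Printing Implicit Defensive.
Import Order.TTheory GRing.Theory Num.Theory.
Import numFieldNormedType.Exports.
Local Open Scope ring_scope.
Local Open Scope classical_set_scope.

Section HRE.
Variables (R : realType) (d : nat).

Definition pt := (R * 'rV[R]_d)%type.

Definition evec (i : 'I_d) : 'rV[R]_d := delta_mx 0 i.

Inductive dop := Dt | Dx of 'I_d.

Definition line (o : dop) (f : pt -> R) (p : pt) : R -> R :=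
  match o with
  | Dt => fun s => f (s, p.2)
  | Dx i => fun h => f (p.1, p.2 + h *: evec i)
  end.

Definition base (o : dop) (p : pt) : R :=
  match o with Dt => p.1 | Dx i => 0 end.

Definition pd (o : dop) (f : pt -> R) (p : pt) : R :=
  derive1 (line o f p) (base o p).

Definition dt (f : pt -> R) := pd Dt f.
Definition dx (i : 'I_d) (f : pt -> R) := pd (Dx i) f.

Definition pds (os : seq dop) (f : pt -> R) : pt -> R := foldr pd f os.

(* f is C^infty on the (open) space-time domain D: every iterated partial
   derivative exists (is differentiable in each coordinate direction) and is
   jointly continuous at every point of D *)
Definition smooth_on (D : set pt) (f : pt -> R) : Prop :=
  forall (os : seq dop) (p : pt), D p ->
    {for p, continuous (pds os f)} /\
    forall o : dop, derivable (line o (pds os f) p) (base o p) 1.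

End HRE.

(* Main.v *)
Require Import Defs.
From HB Require Import structures.
From mathcomp Require Import all_boot all_order all_algebra.
From mathcomp Require Import all_classical all_reals all_analysis.
From mathcomp Require Import ring lra.
Import Order.TTheory GRing.Theory Num.Theory.
Import numFieldNormedType.Exports.
Local Open Scope ring_scope.
Local Open Scope classical_set_scope.
Set Implicit Arguments. Unset Strict Implicit. Unset Printing Implicit Defensive.
Section S.
Variables (R : realType) (d : nat).
Implicit Types (o : dop d) (f g : pt R d -> R) (p q : pt R d).

Definition dvec o : pt R d := match o with Dt => (1, 0) | Dx i => (0, evec R i) end.
Definition sh o (h : R) p : pt R d := p + h *: dvec o.

Lemma line_sh o f p : line o f p = fun s => f (sh o (s - base o p) p).
Proof.
apply/funext => s; case: o => [|i]; case: p => t x /=; congr f;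
rewrite /sh /dvec /=; congr (_, _) => /=.
- by rewrite [_%:A]mulr1 addrC subrK.
- by rewrite scaler0 addr0.
- by rewrite scaler0 addr0.
- by rewrite subr0.
Qed.

Lemma d1_shift (G : R -> R) b s : derive1 (fun r => G (r - b + s)) b = derive1 G s.
Proof.
rewrite /derive1 subrr add0r.
by under eq_fun => h do rewrite addrK.
Qed.

Lemma dbl_shift (G : R -> R) b s : derivable (fun r => G (r - b + s)) b 1 <-> derivable G s 1.
Proof.
rewrite /derivable /= subrr add0r.
by under eq_fun => h do rewrite addrK.
Qed.

Lemma d1_shift0 (G : R -> R) b : derive1 (fun r => G (r - b)) b = derive1 G 0.
Proof.
have E : forall r, r - b = r - b + 0 by move=> r; rewrite addr0.
under eq_fun => r do rewrite E.
exact: d1_shift.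
Qed.

Lemma dbl_shift0 (G : R -> R) b : derivable (fun r => G (r - b)) b 1 <-> derivable G 0 1.
Proof.
have E : forall r, r - b = r - b + 0 by move=> r; rewrite addr0.
under eq_fun => r do rewrite E.
exact: dbl_shift.
Qed.

Lemma pd_sh o f p : pd o f p = derive1 (fun h => f (sh o h p)) 0.
Proof. rewrite /pd line_sh; exact: (d1_shift0 (fun h => f (sh o h p))). Qed.

Definition Dable o f p := derivable (line o f p) (base o p) 1.

Lemma Dable_sh o f p : Dable o f p <-> derivable (fun h => f (sh o h p)) 0 1.
Proof. rewrite /Dable line_sh; exact: (dbl_shift0 (fun h => f (sh o h p))). Qed.

Lemma sh0 o p : sh o 0 p = p.
Proof. by rewrite /sh scale0r addr0. Qed.
Lemma sh_add o a b p : sh o a (sh o b p) = sh o (a + b) p.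
Proof. by rewrite /sh -addrA -scalerDl [b + a]addrC. Qed.
Lemma sh_comm o1 o2 a b p : sh o1 a (sh o2 b p) = sh o2 b (sh o1 a p).
Proof. by rewrite /sh -!addrA [X in _ + X]addrC. Qed.

Lemma line_base o f p : line o f p (base o p) = f p.
Proof. by rewrite line_sh subrr sh0. Qed.

Lemma line2 o (F : R -> R -> R) f g p :
  line o (fun q => F (f q) (g q)) p = fun s => F (line o f p s) (line o g p s).
Proof. by case: o. Qed.
Lemma line1 o (F : R -> R) f p : line o (fun q => F (f q)) p = fun s => F (line o f p s).
Proof. by case: o. Qed.
Lemma lineC o (c : R) p : line o (fun _ => c) p = fun _ => c.
Proof. by case: o. Qed.

Lemma d1M (a b : R -> R) x : derivable a x 1 -> derivable b x 1 ->
  derive1 (fun s => a s * b s) x = derive1 a x * b x + a x * derive1 b x.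
Proof.
move=> da db; rewrite !derive1E.
have -> : (fun s => a s * b s) = a * b by [].
by rewrite (deriveM da db) addrC [_ *: _]mulrC.
Qed.
Lemma dblM (a b : R -> R) x : derivable a x 1 -> derivable b x 1 ->
  derivable (fun s => a s * b s) x 1.
Proof. move=> da db; exact: derivableM. Qed.
Lemma d1D (a b : R -> R) x : derivable a x 1 -> derivable b x 1 ->
  derive1 (fun s => a s + b s) x = derive1 a x + derive1 b x.
Proof.
move=> da db; rewrite !derive1E.
have -> : (fun s => a s + b s) = a + b by [].
by rewrite (deriveD da db).
Qed.
Lemma dblD (a b : R -> R) x : derivable a x 1 -> derivable b x 1 ->
  derivable (fun s => a s + b s) x 1.
Proof. move=> da db; exact: derivableD. Qed.
Lemma d1N (a : R -> R) x : derivable a x 1 ->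
  derive1 (fun s => - a s) x = - derive1 a x.
Proof.
move=> da; have -> : (fun s => - a s) = - a by [].
exact: derive1N.
Qed.
Lemma dblN (a : R -> R) x : derivable a x 1 -> derivable (fun s => - a s) x 1.
Proof. move=> da; exact: derivableN. Qed.
Lemma d1C (c : R) x : derive1 (fun _ : R => c) x = 0.
Proof. exact: (derive1_cst c). Qed.
Lemma dblC (c : R) x : derivable (fun _ : R => c) x 1.
Proof. exact: (derivable_cst c). Qed.

Lemma pdM o f g p : Dable o f p -> Dable o g p ->
  pd o (fun q => f q * g q) p = pd o f p * g p + f p * pd o g p.
Proof. by move=> df dg; rewrite /pd (line2 o *%R) d1M // !line_base. Qed.
Lemma DableM o f g p : Dable o f p -> Dable o g p -> Dable o (fun q => f q * g q) p.
Proof. by move=> df dg; rewrite /Dable (line2 o *%R); apply: dblM. Qed.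
Lemma pdD o f g p : Dable o f p -> Dable o g p ->
  pd o (fun q => f q + g q) p = pd o f p + pd o g p.
Proof. by move=> df dg; rewrite /pd (line2 o +%R) d1D. Qed.
Lemma DableD o f g p : Dable o f p -> Dable o g p -> Dable o (fun q => f q + g q) p.
Proof. by move=> df dg; rewrite /Dable (line2 o +%R); apply: dblD. Qed.
Lemma pdN o f p : Dable o f p -> pd o (fun q => - f q) p = - pd o f p.
Proof. by move=> df; rewrite /pd (line1 o -%R) d1N. Qed.
Lemma DableN o f p : Dable o f p -> Dable o (fun q => - f q) p.
Proof. by move=> df; rewrite /Dable (line1 o -%R); apply: dblN. Qed.
Lemma pdC o (c : R) p : pd o (fun _ => c) p = 0.
Proof. by rewrite /pd lineC d1C. Qed.
Lemma DableC o (c : R) p : Dable o (fun _ => c) p.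
Proof. by rewrite /Dable lineC; apply: dblC. Qed.
Lemma pdZ o (c : R) f p : Dable o f p -> pd o (fun q => c * f q) p = c * pd o f p.
Proof. by move=> df; rewrite (pdM (@DableC o c p) df) pdC mul0r add0r. Qed.
Lemma DableZ o (c : R) f p : Dable o f p -> Dable o (fun q => c * f q) p.
Proof. by move=> df; apply: DableM => //; apply: DableC. Qed.
Lemma pdX2 o f p : Dable o f p -> pd o (fun q => f q ^+ 2) p = 2 * f p * pd o f p.
Proof.
move=> df; have -> : (fun q => f q ^+ 2) = (fun q => f q * f q).
  by apply/funext => q; rewrite expr2.
rewrite pdM //; ring.
Qed.
Lemma DableX2 o f p : Dable o f p -> Dable o (fun q => f q ^+ 2) p.
Proof.
move=> df; have -> : (fun q => f q ^+ 2) = (fun q => f q * f q).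
  by apply/funext => q; rewrite expr2.
exact: DableM.
Qed.

Lemma pd_sum_seq (I : Type) (r : seq I) o (F : I -> pt R d -> R) p :
  (forall i, Dable o (F i) p) ->
  Dable o (fun q => \sum_(i <- r) F i q) p /\ pd o (fun q => \sum_(i <- r) F i q) p = \sum_(i <- r) pd o (F i) p.
Proof.
move=> dF; elim: r => [|a r [IHd IHe]].
  have -> : (fun q => \sum_(i <- [::]) F i q) = (fun _ => 0).
    by apply/funext => q; rewrite big_nil.
  by rewrite big_nil; split; [apply: DableC | apply: pdC].
have -> : (fun q => \sum_(i <- a :: r) F i q) = (fun q => F a q + \sum_(i <- r) F i q).
  by apply/funext => q; rewrite big_cons.
by rewrite big_cons; split; [apply: DableD | rewrite pdD // IHe].
Qed.

Lemma pd_sum o (F : 'I_d -> pt R d -> R) p : (forall i, Dable o (F i) p) ->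
  pd o (fun q => \sum_(i < d) F i q) p = \sum_(i < d) pd o (F i) p.
Proof. by move=> dF; case: (pd_sum_seq (index_enum 'I_d) dF). Qed.
Lemma Dable_sum o (F : 'I_d -> pt R d -> R) p : (forall i, Dable o (F i) p) ->
  Dable o (fun q => \sum_(i < d) F i q) p.
Proof. by move=> dF; case: (pd_sum_seq (index_enum 'I_d) dF). Qed.

Lemma sh_near o1 o2 p (N : set (pt R d)) : nbhs p N ->
  exists2 del : R, 0 < del & forall s h, `|s| < del -> `|h| < del -> N (sh o1 s (sh o2 h p)).
Proof.
move=> /nbhs_ballP [e /= e0 beN].
set c := `|dvec o1| + `|dvec o2| + 1.
have c0 : 0 < c by rewrite /c; have := normr_ge0 (dvec o1); have := normr_ge0 (dvec o2); lra.
exists (e / c); first by apply: divr_gt0.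
move=> s h hs hh; apply: beN; rewrite -ball_normE /= /sh.
have -> : p - (p + h *: dvec o2 + s *: dvec o1) = - (h *: dvec o2 + s *: dvec o1).
  by rewrite -addrA opprD addrA subrr add0r.
rewrite normrN; apply: (le_lt_trans (ler_normD _ _)); rewrite !normrZ.
have h1 := ler_wpM2r (normr_ge0 (dvec o2)) (ltW hh).
have h2 := ler_wpM2r (normr_ge0 (dvec o1)) (ltW hs).
have ec : e / c * c = e by rewrite divfK // gt_eqF.
have ec0 : 0 < e / c by apply: divr_gt0.
rewrite /c in ec; lra.
Qed.

Lemma cont_near o1 o2 p (g : pt R d -> R) : {for p, continuous g} ->
  forall e, 0 < e -> exists2 del : R, 0 < del & forall s h, `|s| < del -> `|h| < del ->
    `|g (sh o1 s (sh o2 h p)) - g p| < e.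
Proof.
move=> cg e e0.
have : \forall q \near p, `|g p - g q| < e.
  by move: cg => /cvgrPdist_lt; apply.
move=> /(sh_near o1 o2) [del del0 H]; exists del => // s h hs hh.
by rewrite distrC; apply: H.
Qed.

Lemma d1_at (G : R -> R) s : derive1 G s = derive1 (fun r => G (r + s)) 0.
Proof. by rewrite /derive1 add0r; under [in RHS]eq_fun => h do rewrite addr0. Qed.

Lemma dbl_at (G : R -> R) s : derivable G s 1 <-> derivable (fun r => G (r + s)) 0 1.
Proof.
rewrite /derivable /= add0r.
have E : forall h : R, h%:A + 0 = h%:A :> R by move=> h; rewrite addr0.
by under [in X in _ <-> X]eq_fun => h do rewrite E.
Qed.

Lemma mvt' (g : R -> R) (t del0 : R) : 0 < t -> t < del0 ->
  (forall x, `|x| < del0 -> derivable g x 1) ->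
  exists2 c, 0 < c < t & g t - g 0 = derive1 g c * t.
Proof.
move=> t0 td dg.
have dx : forall x, 0 <= x <= t -> derivable g x 1.
  move=> x /andP[x0 xt]; apply: dg; rewrite ger0_norm //; lra.
have [c] : exists2 c, c \in `]0, t[%R & g t - g 0 = derive1 g c * (t - 0).
  apply: MVT => //.
- move=> x; rewrite in_itv /= => /andP[a b]; apply: DeriveDef.
    by apply: dx; rewrite ltW // ltW.
  by rewrite derive1E.
- apply: derivable_within_continuous => x; rewrite in_itv /= => /andP[a b].
  by apply: dx; rewrite a b.
by rewrite in_itv /= => /andP[c0 ct] E; exists c; [rewrite c0 ct | rewrite E subr0].
Qed.

Lemma schwarz_est (F : R -> R -> R) (del0 : R) :
  0 < del0 ->
  (forall s h, `|s| < del0 -> `|h| < del0 -> derivable (fun s' => F s' h) s 1) ->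
  (forall s h, `|s| < del0 -> `|h| < del0 ->
     derivable (fun h' => derive1 (fun s' => F s' h') s) h 1) ->
  forall e, 0 < e ->
  (exists2 del1, 0 < del1 & forall s h, `|s| < del1 -> `|h| < del1 ->
       `|derive1 (fun h' => derive1 (fun s' => F s' h') s) h
         - derive1 (fun h' => derive1 (fun s' => F s' h') 0) 0| < e) ->
  exists2 del, 0 < del & forall t, 0 < t -> t < del ->
     `|(F t t - F t 0 - F 0 t + F 0 0) / t ^+ 2
       - derive1 (fun h' => derive1 (fun s' => F s' h') 0) 0| < e.
Proof.
move=> d0 H1 H2 e e0 [del1 d1 Hc].
exists (Num.min del0 del1); first by rewrite lt_min d0 d1.
move=> t t0; rewrite lt_min => /andP[td0 td1].
have n0 : `|0 : R| < del0 by rewrite normr0.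
have nt : `|t| < del0 by rewrite ger0_norm // ltW.
have [xi /andP[xi0 xit] Eg] := @mvt' (fun s => F s t - F s 0) t del0 t0 td0
   (fun x hx => dblD (H1 x t hx nt) (dblN (H1 x 0 hx n0))).
have nxi : `|xi| < del0 by rewrite ger0_norm ?ltW //; lra.
rewrite d1D ?d1N in Eg; [| exact: (H1 _ _ nxi n0) | exact: (H1 _ _ nxi nt) | exact: (dblN (H1 _ _ nxi n0))].
have [eta /andP[eta0 etat] Ek] := @mvt' (fun h => derive1 (fun s' => F s' h) xi) t del0 t0 td0
   (fun x hx => H2 xi x nxi hx).
have key : F t t - F t 0 - F 0 t + F 0 0 =
   derive1 (fun h' => derive1 (fun s' => F s' h') xi) eta * t * t.
  rewrite /= in Eg Ek.
  transitivity ((F t t - F t 0) - (F 0 t - F 0 0)); first ring.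
  rewrite Eg Ek; ring.
rewrite key.
have -> : derive1 (fun h' => derive1 (fun s' => F s' h') xi) eta * t * t / t ^+ 2
   = derive1 (fun h' => derive1 (fun s' => F s' h') xi) eta.
  by field; rewrite gt_eqF.
apply: Hc; rewrite ger0_norm ?ltW //; lra.
Qed.

Definition Del o1 o2 f p t := f (sh o1 t (sh o2 t p)) - f (sh o1 t p) - f (sh o2 t p) + f p.

Lemma est_pd (D : set (pt R d)) f p o1 o2 : smooth_on D f -> nbhs p D ->
  forall e, 0 < e -> exists2 del, 0 < del & forall t, 0 < t -> t < del ->
    `|Del o1 o2 f p t / t ^+ 2 - pd o2 (pd o1 f) p| < e.
Proof.
move=> Hs HnD e e0.
have Dp : D p := nbhs_singleton HnD.
have [dD dD0 HD] := sh_near o1 o2 HnD.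
pose F s h := f (sh o1 s (sh o2 h p)).
have F1E : forall s h, derive1 (fun s' => F s' h) s = pd o1 f (sh o1 s (sh o2 h p)).
  move=> s h; rewrite (d1_at _ s) pd_sh; congr (derive1 _ 0); apply/funext => r /=.
  by rewrite /F sh_add.
have F12E : forall s h, derive1 (fun h' => derive1 (fun s' => F s' h') s) h
    = pd o2 (pd o1 f) (sh o1 s (sh o2 h p)).
  move=> s h; under eq_fun => h' do rewrite F1E.
  rewrite (d1_at _ h) [in RHS]pd_sh; congr (derive1 _ 0); apply/funext => r /=.
  by rewrite (sh_comm o2 o1 r s) sh_add.
have := @schwarz_est F dD dD0.
move=> /(_ _ _ e e0) [].
- move=> s h hs hh; apply/dbl_at.
  have -> : (fun r => F (r + s) h) = (fun r => f (sh o1 r (sh o1 s (sh o2 h p)))).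
    by apply/funext => r; rewrite /F sh_add.
  exact: (Dable_sh _ _ _).1 ((Hs [::] _ (HD s h hs hh)).2 o1).
- move=> s h hs hh; under eq_fun => h' do rewrite F1E.
  apply/dbl_at.
  have -> : (fun r => pd o1 f (sh o1 s (sh o2 (r + h) p)))
      = (fun r => pd o1 f (sh o2 r (sh o1 s (sh o2 h p)))).
    by apply/funext => r; rewrite (sh_comm o2 o1 r s) sh_add.
  exact: (Dable_sh _ _ _).1 ((Hs [:: o1] _ (HD s h hs hh)).2 o2).
- have [del1 d1 Hc] := cont_near o1 o2 (Hs [:: o2; o1] p Dp).1 e0.
  exists del1 => // s h hs hh; rewrite !F12E !sh0; exact: Hc.
move=> del del0 Hdel; exists del => // t t0 tdel.
have := Hdel t t0 tdel; rewrite F12E !sh0.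
by rewrite /Del /F !sh0.
Qed.

Lemma schwarz (D : set (pt R d)) f p o1 o2 : smooth_on D f -> nbhs p D ->
  pd o2 (pd o1 f) p = pd o1 (pd o2 f) p.
Proof.
move=> Hs HnD.
set a := pd o2 (pd o1 f) p; set b := pd o1 (pd o2 f) p.
have H : forall e, 0 < e -> `|a - b| < e + e.
  move=> e e0.
  have [da da0 Ha] := est_pd o1 o2 Hs HnD e0.
  have [db db0 Hb] := est_pd o2 o1 Hs HnD e0.
  set t := Num.min da db / 2.
  have mt : 0 < Num.min da db by rewrite lt_min da0 db0.
  have t0 : 0 < t by rewrite /t divr_gt0.
  have tm : t < Num.min da db by rewrite /t ltr_pdivrMr // ltr_pMr // ltr1n.
  move: tm; rewrite lt_min => /andP[ta tb].
  have := Ha t t0 ta; have := Hb t t0 tb.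
  have -> : Del o2 o1 f p t = Del o1 o2 f p t.
    by rewrite /Del (sh_comm o2 o1 t t); ring.
  set x := Del o1 o2 f p t / t ^+ 2 => h1 h2.
  have := ler_normB (x - a) (x - b).
  have -> : x - a - (x - b) = b - a by ring.
  rewrite distrC; lra.
suff : `|a - b| <= 0 by rewrite normr_le0 subr_eq0 => /eqP.
rewrite leNgt; apply/negP => pos.
have := H (`|a - b| / 4); rewrite divr_gt0 // => /(_ isT); lra.
Qed.

Lemma Dnbhs (Omega : set 'rV[R]_d) (I : set R) (p : pt R d) :
  open Omega -> open I -> I p.1 -> Omega p.2 -> nbhs p [set q : pt R d | I q.1 /\ Omega q.2].
Proof.
move=> oO oI Ip Op. exists (I, Omega) => /=.
  by split; [apply: oI| apply: oO].
by case=> a b /= [].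
Qed.

Lemma pd_local (D : set (pt R d)) f g o p : nbhs p D -> (forall q, D q -> f q = g q) ->
  pd o f p = pd o g p.
Proof.
move=> HnD fg.
have [del del0 H] := sh_near o o HnD.
rewrite !pd_sh !derive1E; apply: near_eq_derive.
apply/nbhs_ballP; exists del => //= h; rewrite -ball_normE /= sub0r normrN => hd.
by apply: fg; move: (H h 0 hd); rewrite normr0 sh0; apply.
Qed.

End S.

Theorem mainTheorem8 (R : realType) (d : nat)
  (Omega : set 'rV[R]_d) (I : set R)
  (rho Sigma : pt R d -> R) (u : 'I_d -> pt R d -> R) (alpha : R) :
  open Omega -> open I -> 0 < alpha ->
  let D : set (pt R d) := [set p | I p.1 /\ Omega p.2] in
  smooth_on D rho -> smooth_on D Sigma -> (forall i, smooth_on D (u i)) ->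
  (forall p, D p -> 0 < rho p) ->
  (* continuity equation *)
  (forall p, D p ->
     dt rho p + \sum_(j < d) dx j (fun q => rho q * u j q) p = 0) ->
  (* momentum equation, componentwise *)
  (forall (i : 'I_d) p, D p ->
     dt (fun q => rho q * u i q) p
     + \sum_(j < d) dx j (fun q => rho q * u i q * u j q
                                   + (if i == j then Sigma q else 0)) p = 0) ->
  (* equation for Sigma *)
  (forall p, D p ->
     Sigma p / rho p
     - alpha * \sum_(j < d) dx j (fun q => dx j Sigma q / rho q) p
     = alpha * \sum_(i < d) \sum_(j < d) dx j (u i) p * dx i (u j) p) ->
  let KE : pt R d -> R := fun q =>
    2^-1 * rho q * (\sum_(i < d) u i q ^+ 2
                    + alpha * (\sum_(i < d) dx i (u i) q) ^+ 2) in
  forall p, D p ->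
    dt KE p + \sum_(j < d) dx j (fun q => (KE q + Sigma q) * u j q) p = 0.
Proof.
move=> oO oI a0 D Hr HS Hu rpos HC HM HSig KE p Dp.
have HnD : forall q, D q -> nbhs q D.
  by move=> q [Iq Oq]; apply: Dnbhs.
have Dr : forall o q, D q -> Dable o rho q by move=> o q Dq; exact: (Hr [::] q Dq).2.
have DS : forall o q, D q -> Dable o Sigma q by move=> o q Dq; exact: (HS [::] q Dq).2.
have Du : forall i o q, D q -> Dable o (u i) q by move=> i o q Dq; exact: (Hu i [::] q Dq).2.
have Du1 : forall i o1 o q, D q -> Dable o (pd o1 (u i)) q.
  by move=> i o1 o q Dq; exact: (Hu i [:: o1] q Dq).2.
have DS1 : forall o1 o q, D q -> Dable o (pd o1 Sigma) q.
  by move=> o1 o q Dq; exact: (HS [:: o1] q Dq).2.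
rewrite /KE /dx /dt in HC HM HSig *.
have Mloc : forall i q, D q ->
    rho q * (pd (Dt d) (u i) q + \sum_(j < d) u j q * pd (Dx j) (u i) q) + pd (Dx i) Sigma q = 0.
  move=> i q Dq.
  have hC := HC q Dq; have hM := HM i q Dq.
  rewrite (pdM (Dr _ _ Dq) (Du i _ _ Dq)) in hM.
  have Ej : forall j, pd (Dx j) (fun q => rho q * u i q * u j q + (if i == j then Sigma q else 0)) q
      = ((pd (Dx j) rho q * u i q + rho q * pd (Dx j) (u i) q) * u j q
         + rho q * u i q * pd (Dx j) (u j) q) + (if i == j then pd (Dx j) Sigma q else 0).
    move=> j; case: eqP => _.
    - rewrite (pdD (DableM (DableM (Dr _ _ Dq) (Du i _ _ Dq)) (Du j _ _ Dq)) (DS _ _ Dq)).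
      by rewrite (pdM (DableM (Dr _ _ Dq) (Du i _ _ Dq)) (Du j _ _ Dq)) (pdM (Dr _ _ Dq) (Du i _ _ Dq)).
    - rewrite (pdD (DableM (DableM (Dr _ _ Dq) (Du i _ _ Dq)) (Du j _ _ Dq)) (@DableC _ _ _ 0 _)) pdC.
      by rewrite (pdM (DableM (Dr _ _ Dq) (Du i _ _ Dq)) (Du j _ _ Dq)) (pdM (Dr _ _ Dq) (Du i _ _ Dq)).
  rewrite (eq_bigr _ (fun j _ => Ej j)) big_split /= in hM.
  have Hif : \sum_(j < d) (if i == j then pd (Dx j) Sigma q else 0) = pd (Dx i) Sigma q.
    rewrite (bigD1 i) //= eqxx big1 ?addr0 // => j /negPf.
    by rewrite eq_sym => ->.
  rewrite Hif in hM.
  have Ec : forall j, pd (Dx j) (fun q => rho q * u j q) q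
      = pd (Dx j) rho q * u j q + rho q * pd (Dx j) (u j) q.
    by move=> j; rewrite (pdM (Dr _ _ Dq) (Du j _ _ Dq)).
  rewrite (eq_bigr _ (fun j _ => Ec j)) in hC.
  have key : \sum_(j < d) ((pd (Dx j) rho q * u i q + rho q * pd (Dx j) (u i) q) * u j q
         + rho q * u i q * pd (Dx j) (u j) q)
      = u i q * \sum_(j < d) (pd (Dx j) rho q * u j q + rho q * pd (Dx j) (u j) q)
        + rho q * \sum_(j < d) (u j q * pd (Dx j) (u i) q).
    rewrite !mulr_sumr -big_split; apply: eq_bigr => j _ /=; ring.
  rewrite key in hM.
  have hC' := congr1 (fun x => u i q * x) hC; rewrite /= mulrDr mulr0 in hC'.
  rewrite mulrDr; lra.
have Da : forall i o q, D q -> Dable o (fun q =>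
      pd (Dt d) (u i) q + \sum_(k < d) u k q * pd (Dx k) (u i) q) q.
  move=> i o q Dq; apply: DableD; first exact: Du1.
  by apply: Dable_sum => k; apply: DableM; [exact: Du | exact: Du1].
have St4 : forall j, pd (Dx j) (fun q => pd (Dx j) Sigma q / rho q) p
    = - pd (Dx j) (fun q => pd (Dt d) (u j) q + \sum_(k < d) u k q * pd (Dx k) (u j) q) p.
  move=> j; rewrite -(pdN (Da j _ _ Dp)); apply: (pd_local _ (HnD p Dp)) => q Dq.
  move: (Mloc j q Dq); set A := (X in rho q * X) => E.
  rewrite -/A.
  have -> : pd (Dx j) Sigma q = - (rho q * A) by lra.
  by rewrite mulNr mulrAC divff ?mul1r // lt0r_neq0 // rpos.
have Ea : forall i, pd (Dx i) (fun q => pd (Dt d) (u i) q + \sum_(k < d) u k q * pd (Dx k) (u i) q) p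
    = pd (Dt d) (pd (Dx i) (u i)) p
      + \sum_(k < d) (pd (Dx i) (u k) p * pd (Dx k) (u i) p
                      + u k p * pd (Dx k) (pd (Dx i) (u i)) p).
  move=> i; rewrite (pdD (Du1 i _ _ _ Dp)); last first.
    by apply: Dable_sum => k; apply: DableM; [exact: Du | exact: Du1].
  rewrite pd_sum; last by move=> k; apply: DableM; [exact: Du | exact: Du1].
  rewrite (schwarz (Dt d) (Dx i) (Hu i) (HnD p Dp)); congr (_ + _).
  apply: eq_bigr => k _; rewrite (pdM (Du k _ _ Dp) (Du1 i _ _ _ Dp)).
  by rewrite (schwarz (Dx k) (Dx i) (Hu i) (HnD p Dp)).
have hW : Sigma p + rho p * alpha * (\sum_(i < d) pd (Dt d) (pd (Dx i) (u i)) p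
      + \sum_(j < d) u j p * \sum_(i < d) pd (Dx j) (pd (Dx i) (u i)) p) = 0.
  have hs := HSig p Dp.
  have E1 : \sum_(j < d) pd (Dx j) (fun q => pd (Dx j) Sigma q / rho q) p
     = - (\sum_(j < d) pd (Dt d) (pd (Dx j) (u j)) p
          + (\sum_(j < d) \sum_(k < d) (pd (Dx j) (u k) p * pd (Dx k) (u j) p)
             + \sum_(j < d) \sum_(k < d) (u k p * pd (Dx k) (pd (Dx j) (u j)) p))).
    rewrite (eq_bigr _ (fun j _ => St4 j)) sumrN; congr (- _).
    rewrite (eq_bigr _ (fun j _ => Ea j)) big_split /=; congr (_ + _).
    rewrite -big_split /=; apply: eq_bigr => j _; exact: big_split.
  have ET : \sum_(j < d) \sum_(k < d) (pd (Dx j) (u k) p * pd (Dx k) (u j) p)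
      = \sum_(i < d) \sum_(j < d) pd (Dx j) (u i) p * pd (Dx i) (u j) p.
    by apply: eq_bigr => i _; apply: eq_bigr => j _; exact: mulrC.
  have EB : \sum_(j < d) \sum_(k < d) (u k p * pd (Dx k) (pd (Dx j) (u j)) p)
      = \sum_(j < d) u j p * \sum_(i < d) pd (Dx j) (pd (Dx i) (u i)) p.
    by rewrite exchange_big /=; apply: eq_bigr => k _; rewrite mulr_sumr.
  rewrite E1 ET EB in hs.
  have rp := rpos p Dp.
  have hs' : Sigma p / rho p + alpha * (\sum_(i < d) pd (Dt d) (pd (Dx i) (u i)) p
      + \sum_(j < d) u j p * \sum_(i < d) pd (Dx j) (pd (Dx i) (u i)) p) = 0.
    rewrite mulrDr; lra.
  have -> : Sigma p + rho p * alpha * (\sum_(i < d) pd (Dt d) (pd (Dx i) (u i)) p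
      + \sum_(j < d) u j p * \sum_(i < d) pd (Dx j) (pd (Dx i) (u i)) p)
     = rho p * (Sigma p / rho p + alpha * (\sum_(i < d) pd (Dt d) (pd (Dx i) (u i)) p
      + \sum_(j < d) u j p * \sum_(i < d) pd (Dx j) (pd (Dx i) (u i)) p)).
    by field; apply: lt0r_neq0.
  by rewrite hs' mulr0.
have hKE : forall o, pd o (fun q => 2^-1 * rho q * (\sum_(i < d) u i q ^+ 2 + alpha * (\sum_(i < d) pd (Dx i) (u i) q) ^+ 2)) p
    = 2^-1 * pd o rho p * (\sum_(i < d) u i p ^+ 2 + alpha * (\sum_(i < d) pd (Dx i) (u i) p) ^+ 2)
      + 2^-1 * rho p * (2 * (\sum_(i < d) u i p * pd o (u i) p)
                        + alpha * (2 * ((\sum_(i < d) pd (Dx i) (u i) p) * \sum_(i < d) pd o (pd (Dx i) (u i)) p))).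
  move=> o.
  have DKr : Dable o (fun q => 2^-1 * rho q) p := @DableZ _ _ o (2^-1) _ _ (Dr o p Dp).
  have DU : Dable o (fun q => \sum_(i < d) u i q ^+ 2) p :=
    Dable_sum (fun i => DableX2 (Du i o p Dp)).
  have Dw : Dable o (fun q => \sum_(i < d) pd (Dx i) (u i) q) p :=
    Dable_sum (fun i => Du1 i (Dx i) o p Dp).
  have DW2 : Dable o (fun q => alpha * (\sum_(i < d) pd (Dx i) (u i) q) ^+ 2) p :=
    @DableZ _ _ o alpha _ _ (DableX2 Dw).
  rewrite (pdM DKr (DableD DU DW2)) (pdZ (2^-1) (Dr o p Dp)) (pdD DU DW2).
  rewrite (pdZ (alpha) (DableX2 Dw)) (pdX2 Dw).
  rewrite (pd_sum (fun i => DableX2 (Du i o p Dp))) (pd_sum (fun i => Du1 i (Dx i) o p Dp)).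
  rewrite (eq_bigr _ (fun i _ => pdX2 (Du i o p Dp))).
  under eq_bigr do rewrite -mulrA.
  rewrite -(mulr_sumr _ _ _ 2) /=; ring.
have DKE : forall o, Dable o (fun q => 2^-1 * rho q * (\sum_(i < d) u i q ^+ 2 + alpha * (\sum_(i < d) pd (Dx i) (u i) q) ^+ 2)) p.
  move=> o; apply: DableM; first exact: DableZ (Dr o p Dp).
  apply: DableD; first exact: Dable_sum (fun i => DableX2 (Du i o p Dp)).
  exact: DableZ (DableX2 (Dable_sum (fun i => Du1 i (Dx i) o p Dp))).
have Sj : \sum_(j < d) pd (Dx j) (fun q => ((fun q => 2^-1 * rho q * (\sum_(i < d) u i q ^+ 2 + alpha * (\sum_(i < d) pd (Dx i) (u i) q) ^+ 2)) q + Sigma q) * u j q) p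
    = 2^-1 * (\sum_(i < d) u i p ^+ 2 + alpha * (\sum_(i < d) pd (Dx i) (u i) p) ^+ 2) * (\sum_(j < d) (pd (Dx j) rho p * u j p + rho p * pd (Dx j) (u j) p)) + rho p * (\sum_(j < d) u j p * \sum_(i < d) u i p * pd (Dx j) (u i) p) + rho p * alpha * (\sum_(i < d) pd (Dx i) (u i) p) * (\sum_(j < d) u j p * \sum_(i < d) pd (Dx j) (pd (Dx i) (u i)) p) + (\sum_(j < d) pd (Dx j) Sigma p * u j p)
      + Sigma p * (\sum_(i < d) pd (Dx i) (u i) p).
  rewrite (mulr_sumr _ _ _ (rho p * alpha * (\sum_(i < d) pd (Dx i) (u i) p))) (mulr_sumr _ _ _ (2^-1 * (\sum_(i < d) u i p ^+ 2 + alpha * (\sum_(i < d) pd (Dx i) (u i) p) ^+ 2))) (mulr_sumr _ _ _ (rho p)).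
  rewrite (mulr_sumr _ _ _ (Sigma p)) -!big_split /=; apply: eq_bigr => j _.
  rewrite (pdM (DableD (DKE _) (DS _ _ Dp)) (Du j _ _ Dp)) (pdD (DKE _) (DS _ _ Dp)) hKE /=.
  by field.
have Ex : (\sum_(j < d) u j p * \sum_(i < d) u i p * pd (Dx j) (u i) p) = \sum_(i < d) u i p * \sum_(k < d) u k p * pd (Dx k) (u i) p.
  transitivity (\sum_(j < d) \sum_(i < d) u j p * (u i p * pd (Dx j) (u i) p)).
    by apply: eq_bigr => j _; rewrite mulr_sumr.
  rewrite exchange_big /=; apply: eq_bigr => i _; rewrite mulr_sumr.
  by apply: eq_bigr => j _ ; ring.
have hM2 : rho p * (\sum_(i < d) u i p * pd (Dt d) (u i) p) + rho p * (\sum_(j < d) u j p * \sum_(i < d) u i p * pd (Dx j) (u i) p) + (\sum_(j < d) pd (Dx j) Sigma p * u j p) = 0.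
  rewrite Ex !(mulr_sumr _ _ _ (rho p)) -!big_split /=; apply: big1 => i _.
  have E := congr1 (fun x => u i p * x) (Mloc i p Dp); rewrite /= mulr0 in E.
  by apply: (etrans _ E); ring.
have hC : pd (Dt d) rho p + (\sum_(j < d) (pd (Dx j) rho p * u j p + rho p * pd (Dx j) (u j) p)) = 0.
  apply: (etrans _ (HC p Dp)); congr (_ + _); apply: eq_bigr => j _.
  by rewrite (pdM (Dr _ _ Dp) (Du j _ _ Dp)).
rewrite (hKE (Dt d)) Sj.
have hC2 := congr1 (fun x => 2^-1 * (\sum_(i < d) u i p ^+ 2 + alpha * (\sum_(i < d) pd (Dx i) (u i) p) ^+ 2) * x) hC.
have hW2 := congr1 (fun x => (\sum_(i < d) pd (Dx i) (u i) p) * x) hW.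
rewrite /= mulr0 in hC2 hW2.
lra.
Qed.
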